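(* If $Y^*\in\mathcal L^1(\mathcal Q)$ and $\rho_{\mathcal Q}$ is continuous from above at $0$, then (i) $\sup_{\tau\in\mathcal T}\inf_{\mathrm Q\in\overline{\mathcal Q}}\mathbb E_{\mathrm Q}[Y_\tau]=\sup_{\tau\in\mathcal T_f}\inf_{\mathrm Q\in\overline{\mathcal Q}}\mathbb E_{\mathrm Q}[Y_\tau]$; (ii) $\inf_{\mathrm Q\in\overline{\mathcal Q}}\sup_{\tau\in\mathcal T}\mathbb E_{\mathrm Q}[Y_\tau]=\inf_{\mathrm Q\in\overline{\mathcal Q}}\sup_{\tau\in\mathcal T_f}\mathbb E_{\mathrm Q}[Y_\tau]$.
   Context: Let $(\Omega,\mathcal F,(\mathcal F_t)_{0\le t\le T},\mathrm P)$ be a filtered probability space ($0<T<\infty$) with right-continuous filtration, $\mathcal F=\mathcal F_T$, $\mathcal F_0$ trivial and containing all $\mathrm P$-null sets. $\mathcal T$ is the set of stopping times $\tau\le T$ and $\mathcal T_f$ the set of those with finite range. $\mathcal Q$ is a nonempty set of probability measures on $\mathcal F$, each absolutely continuous w.r.t. $\mathrm P$. $\mathcal L^1(\mathcal Q)$ is the set of random variables $X$ with $\sup_{\mathrm Q\in\mathcal Q}\mathbb E_{\mathrm Q}[|X|]<\infty$. $Y=(Y_t)_{0\le t\le T}$ is a right-continuous adapted process with bounded paths, quasi left-uppersemicontinuous w.r.t. $\mathrm P$, and $Y^*:=\sup_{t\in[0,T]}|Y_t|$. $\mathcal X$ is the set of random variables $X$ with $|X|\le C(Y^*+1)$ $\mathrm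 P$-a.s. for some $C>0$; $\rho_{\mathcal Q}(X)=\sup_{\mathrm Q\in\mathcal Q}\mathbb E_{\mathrm Q}[X]$ for $X\in\mathcal X$; $\rho_{\mathcal Q}$ is continuous from above at $0$ if $\rho_{\mathcal Q}(X_n)\searrow0$ whenever $X_n\in\mathcal X$, $X_n\searrow0$ $\mathrm P$-a.s. $\overline{\mathcal Q}$ is the set of probability measures $\mathrm Q$ on $\mathcal F$ such that every $X\in\mathcal X$ is $\mathrm Q$-integrable and $\mathbb E_{\mathrm Q}[X]\le\rho_{\mathcal Q}(X)$ for all $X\in\mathcal X$. *)

(* Defs.v *)
From HB Require Import structures.
From mathcomp Require Import all_boot all_order all_algebra.
From mathcomp Require Import all_classical all_reals all_analysis.

Set Implicit Arguments.
Unset Strict Implicit.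
Unset Printing Implicit Defensive.

Import Order.TTheory GRing.Theory Num.Theory numFieldNormedType.Exports.
Local Open Scope classical_set_scope.
Local Open Scope ring_scope.

Section defs.
Context {d : measure_display} {T : measurableType d} {R : realType}.

(** Time horizon [0, Tend]; the filtration is a map F : R -> set (set T),
    only its values on [0, Tend] matter. *)

Definition filtration (P : probability T R) (Tend : R)
    (F : R -> set (set T)) : Prop :=
  [/\ (forall t, 0 <= t <= Tend -> sigma_algebra setT (F t)),
      (forall s t, 0 <= s -> s <= t -> t <= Tend -> F s `<=` F t),
      F Tend = measurable &
      (forall t, 0 <= t < Tend -> forall A,
          (forall s, t < s <= Tend -> F s A) -> F t A)] /\
  [/\ (forall A, F 0 A -> P A = 0%E \/ P A = 1%E) &
      (forall A, measurable A -> P A = 0%E -> F 0 A)].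

Definition stopping_time (Tend : R) (F : R -> set (set T)) (tau : T -> R)
    : Prop :=
  (forall w, 0 <= tau w <= Tend) /\
  (forall t, 0 <= t <= Tend -> F t [set w | tau w <= t]).

Definition finite_stopping_time (Tend : R) (F : R -> set (set T))
    (tau : T -> R) : Prop :=
  stopping_time Tend F tau /\ finite_set (range tau).

Definition adapted (Tend : R) (F : R -> set (set T)) (Y : R -> T -> R) :=
  forall t, 0 <= t <= Tend ->
    forall B : set R, measurable B -> F t (Y t @^-1` B).

Definition right_continuous_paths (Tend : R) (Y : R -> T -> R) :=
  forall (w : T) (t : R), 0 <= t < Tend ->
    (fun s : R => Y s w) @ at_right t --> Y t w.

Definition bounded_paths (Tend : R) (Y : R -> T -> R) :=
  forall w, exists M : R, forall t, 0 <= t <= Tend -> `|Y t w| <= M.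

Definition quasi_left_usc (P : probability T R) (Tend : R)
    (F : R -> set (set T)) (Y : R -> T -> R) :=
  forall (taun : nat -> T -> R) (tau : T -> R),
    (forall n, stopping_time Tend F (taun n)) -> stopping_time Tend F tau ->
    (forall w, nondecreasing_seq (fun n => taun n w)) ->
    (forall w, (fun n => taun n w) @ \oo --> tau w) ->
    {ae P, forall w,
       (limn_esup (fun n => (Y (taun n w) w)%:E) <= (Y (tau w) w)%:E)%E}.

Definition Ystar (Tend : R) (Y : R -> T -> R) (w : T) : R :=
  sup [set `|Y t w| | t in [set t | 0 <= t <= Tend]].

Definition expect (Q : probability T R) (X : T -> R) : \bar R :=
  (\int[Q]_w (X w)%:E)%E.

Definition L1Q (Qs : set (probability T R)) (X : T -> R) : Prop :=
  (ereal_sup [set expect Q (fun w => (`|X w|)%R) | Q in Qs] < +oo)%E.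

Definition calX (P : probability T R) (Tend : R) (Y : R -> T -> R)
    (X : T -> R) : Prop :=
  measurable_fun setT X /\
  exists C : R, 0 < C /\ {ae P, forall w, `|X w| <= C * (Ystar Tend Y w + 1)}.

Definition rhoQ (Qs : set (probability T R)) (X : T -> R) : \bar R :=
  ereal_sup [set expect Q X | Q in Qs].

Definition cont_from_above_at0 (P : probability T R) (Qs : set (probability T R))
    (Tend : R) (Y : R -> T -> R) : Prop :=
  forall Xn : nat -> T -> R,
    (forall n, calX P Tend Y (Xn n)) ->
    {ae P, forall w, nonincreasing_seq (fun n => Xn n w) /\
                     (fun n => Xn n w) @ \oo --> (0 : R)} ->
    (fun n => rhoQ Qs (Xn n)) @ \oo --> 0%E.

Definition Qbar (P : probability T R) (Qs : set (probability T R))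
    (Tend : R) (Y : R -> T -> R) : set (probability T R) :=
  [set Q : probability T R | forall X, calX P Tend Y X ->
             Q.-integrable setT (EFin \o X) /\ (expect Q X <= rhoQ Qs X)%E].

End defs.

(* Main.v *)
Require Import Defs.
From HB Require Import structures.
From mathcomp Require Import all_boot all_order all_algebra.
From mathcomp Require Import all_classical all_reals all_analysis.
From mathcomp Require Import measurable_realfun.
From mathcomp Require Import ring lra.
Import Order.TTheory GRing.Theory Num.Theory numFieldNormedType.Exports.
Set Implicit Arguments.
Unset Strict Implicit.
Local Open Scope classical_set_scope.
Local Open Scope ring_scope.

Lemma Fsub_meas (d : measure_display) (T : measurableType d) (R : realType)
  (P : probability T R) (Tend : R) (F : R -> set (set T)) (t : R) :
  filtration P Tend F -> 0 <= t <= Tend -> F t `<=` measurable.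
Proof.
move=> [[_ Fmono FT _] _] /andP[t0 tT].
by rewrite -FT; apply: Fmono.
Qed.

Lemma st_meas (d : measure_display) (T : measurableType d) (R : realType)
  (P : probability T R) (Tend : R) (F : R -> set (set T)) (tau : T -> R) :
  filtration P Tend F -> stopping_time Tend F tau -> measurable_fun setT tau.
Proof.
move=> hF [tb tF].
apply: (measurability _ (RGenOInfty.measurableE R)) => //.
move=> _ [_ [x ->] <-].
have -> : setT `&` tau @^-1` `]x, +oo[ = ~` [set w | tau w <= x].
  apply/seteqP; split => w /=.
    by rewrite in_itv /= andbT => -[_ hw]; apply/negP; rewrite -ltNge.
  by move/negP; rewrite -ltNge => hw; split => //; rewrite in_itv /= andbT.
apply: measurableC.
have [x0|x0] := ltP x 0.
  have -> : [set w | tau w <= x] = set0 => //.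
  apply/seteqP; split => w //= hw.
  by have := tb w; rewrite leNgt (le_lt_trans hw x0).
have [xT|xT] := leP x Tend.
  apply: (Fsub_meas (t:=x) hF); first by rewrite x0 xT.
  by apply: tF; rewrite x0 xT.
have -> : [set w | tau w <= x] = setT => //.
apply/seteqP; split => w //= _.
by have /andP[_ /le_trans ->] := tb w => //; exact: ltW.
Qed.

Lemma Ysig_meas (d : measure_display) (T : measurableType d) (R : realType)
  (P : probability T R) (Tend : R) (F : R -> set (set T)) (Y : R -> T -> R)
  (s : T -> R) :
  filtration P Tend F -> adapted Tend F Y -> finite_stopping_time Tend F s ->
  measurable_fun setT (fun w => Y (s w) w).
Proof.
move=> hF hY [[sb sF] sfin] _ B mB.
have -> : setT `&` (fun w => Y (s w) w) @^-1` B =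
   \bigcup_(t in range s) (setT `&` s @^-1` [set t] `&` Y t @^-1` B).
  apply/seteqP; split => w /=.
    by move=> [_ hw]; exists (s w) => //; exists w.
  by move=> [t _ [[_ <-] hw]].
apply: fin_bigcup_measurable => // t [w _ <-].
apply: measurableI.
  by apply: (st_meas hF (conj sb sF)) => //; exact: measurable_set1.
by apply: (Fsub_meas hF (sb w)); apply: hY => //; exact: sb.
Qed.

Definition grid (T : Type) (R : realType) (Tend : R) (m : nat) (tau : T -> R)
  : T -> R :=
  fun w => Tend / m.+1%:R * (Num.ceil (tau w / (Tend / m.+1%:R)))%:~R.

Lemma grid_props (T : Type) (R : realType) (Tend : R) (m : nat) (tau : T -> R)
  (w : T) : 0 < Tend -> 0 <= tau w <= Tend ->
  [/\ tau w <= grid Tend m tau w, grid Tend m tau w <= Tend &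
      grid Tend m tau w < tau w + Tend / m.+1%:R].
Proof.
move=> T0 /andP[t0 tT]; rewrite /grid.
set a := Tend / m.+1%:R.
have a0 : 0 < a by rewrite divr_gt0.
set x := tau w / a.
have xa : x * a = tau w by rewrite /x divfK // gt_eqF.
have Ta : Tend / a = m.+1%:R.
  by rewrite /a invf_div mulrCA divff ?mulr1 // gt_eqF.
set c := Num.ceil x.
have h1 : x <= c%:~R by exact: ceil_ge.
have h2 : (c - 1)%:~R < x by exact: ceilB1_lt.
have h3 : c <= m.+1%:Z.
  rewrite ceil_le_int; change (x <= (m.+1)%:R :> R).
  by rewrite /x -Ta ler_pM2r ?invr_gt0.
have h3' : c%:~R <= m.+1%:R :> R by rewrite -(ler_int R) in h3.
have h4 : c%:~R * a <= m.+1%:R * a by rewrite ler_pM2r.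
have h5 : m.+1%:R * a = Tend by rewrite -Ta divfK // gt_eqF.
have h1' : x * a <= c%:~R * a by rewrite ler_pM2r.
have h2' : (c - 1)%:~R * a < x * a by rewrite ltr_pM2r.
rewrite intrB in h2'.
split; lra.
Qed.

Lemma grid_st (d : measure_display) (T : measurableType d) (R : realType)
  (P : probability T R) (Tend : R) (F : R -> set (set T)) (tau : T -> R)
  (m : nat) :
  0 < Tend -> filtration P Tend F -> stopping_time Tend F tau ->
  finite_stopping_time Tend F (grid Tend m tau).
Proof.
move=> T0 [[_ Fmono _ _] _] [tb tF].
set a := Tend / m.+1%:R.
have a0 : 0 < a by rewrite divr_gt0.
split; [split|].
- move=> w; have [g1 g2 _] := grid_props m T0 (tb w).
  by rewrite g2 andbT; have /andP[t0 _] := tb w; exact: le_trans g1.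
- move=> t /andP[t0 tT].
  set k := Num.floor (t / a).
  have k0 : 0 <= k by rewrite /k floor_ge0 divr_ge0 // ltW.
  have kt : k%:~R <= t / a by exact: floor_le.
  have s0 : 0 <= a * k%:~R by apply: mulr_ge0; [exact: ltW | rewrite ler0z].
  have st : a * k%:~R <= t by rewrite mulrC -ler_pdivlMr.
  have -> : [set w | grid Tend m tau w <= t] = [set w | tau w <= a * k%:~R].
    apply/seteqP; split => w /=.
    + rewrite /grid -/a mulrC -ler_pdivlMr // -/k.
      rewrite -floor_ge_int -/k ceil_le_int => h.
      by rewrite mulrC -ler_pdivrMr.
    + move=> h; rewrite /grid -/a mulrC -ler_pdivlMr // -floor_ge_int -/k.
      by rewrite ceil_le_int ler_pdivrMr // mulrC.
  apply: (Fmono (a * k%:~R) t s0 st tT).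
  by apply: tF; rewrite s0 (le_trans st tT).
- apply: (@sub_finite_set _ _ [set a * k%:R | k in `I_(m.+2)]);
    last exact/finite_image/finite_II.
  move=> _ [w _ <-]; rewrite /grid -/a.
  have [g1 g2 _] := grid_props m T0 (tb w).
  move: g1 g2; rewrite /grid -/a.
  case Hc: (Num.ceil (tau w / a)) => [k|k] g1 g2.
    exists k => //=.
    have : (k%:R : R) <= m.+1%:R.
      by rewrite -(ler_pM2l a0); apply: (le_trans g2); rewrite /a divfK // gt_eqF.
    by rewrite ler_nat.
  exfalso.
  have /andP[t0 _] := tb w.
  have := le_trans t0 g1.
  rewrite NegzE mulrN oppr_ge0 => h.
  suff : 0 < a * k.+1%:R by rewrite ltNge h.
  by rewrite mulr_gt0 // ltr0Sn.
Qed.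

Lemma grid_conv (d : measure_display) (T : measurableType d) (R : realType) (Tend : R) (tau : T -> R)
  (Y : R -> T -> R) (w : T) (e : R) :
  0 < Tend -> 0 <= tau w <= Tend -> right_continuous_paths Tend Y -> 0 < e ->
  \forall k \near \oo, `|Y (grid Tend k tau w) w - Y (tau w) w| < e.
Proof.
move=> T0 tb hY e0.
have /andP[t0 tT] := tb.
have [tE|tlt] := eqVneq (tau w) Tend.
  apply: nearW => k.
  have [g1 g2 _] := grid_props k T0 tb.
  have -> : grid Tend k tau w = tau w by apply/eqP; rewrite eq_le g1 andbT tE.
  by rewrite subrr normr0.
have tl : tau w < Tend by rewrite lt_neqAle tlt tT.
have hc := hY w (tau w); rewrite t0 tl in hc.
have := cvgr_dist_lt _ _ (hc isT) _ e0.
move=> /(_ (at_right_proper_filter _)).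
rewrite /at_right /within /= => /nbhs_ballP [r /= r0 hr].
have := near_infty_natSinv_lt (PosNum (divr_gt0 r0 T0)).
apply: filterS => k /= hk.
have [g1 g2 g3] := grid_props k T0 tb.
have [gE|gne] := eqVneq (grid Tend k tau w) (tau w).
  by rewrite gE subrr normr0.
have gt : tau w < grid Tend k tau w by rewrite lt_neqAle eq_sym gne g1.
rewrite distrC; apply: hr => //.
rewrite -ball_normE /ball_ /= distrC ger0_norm ?subr_ge0 ?ltW //.
have : Tend / k.+1%:R < r.
  by rewrite -ltr_pdivlMl // mulrC.
move: g3; set q := Tend / k.+1%:R; move=> ? ?; lra.
Qed.

Lemma Ystar_bound (d : measure_display) (T : measurableType d) (R : realType)
  (Tend : R) (Y : R -> T -> R) (w : T) (s : R) :
  bounded_paths Tend Y -> 0 <= s <= Tend -> `|Y s w| <= Ystar Tend Y w.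
Proof.
move=> hb hs; rewrite /Ystar; apply: ub_le_sup; last by exists s.
by have [M hM] := hb w; exists M => _ [t ht <-]; exact: hM.
Qed.

Local Open Scope ereal_scope.

Lemma approx (d : measure_display) (T : measurableType d) (R : realType)
  (P : probability T R) (Tend : R) (F : R -> set (set T))
  (Qs : set (probability T R)) (Y : R -> T -> R) (tau : T -> R) (e : R) :
  (0 < Tend)%R -> filtration P Tend F -> adapted Tend F Y ->
  right_continuous_paths Tend Y -> bounded_paths Tend Y ->
  cont_from_above_at0 P Qs Tend Y -> stopping_time Tend F tau -> (0 < e)%R ->
  exists s, finite_stopping_time Tend F s /\
    forall Q, Qbar P Qs Tend Y Q ->
      expect Q (fun w => Y (tau w) w) <= expect Q (fun w => Y (s w) w) + e%:E.
Proof.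
move=> T0 hF hY hrc hbd hcont hst e0.
have [tb tF] := hst.
pose g k := grid Tend k tau.
have gst k : finite_stopping_time Tend F (g k) := grid_st k T0 hF hst.
have mYg k : measurable_fun setT (fun w => Y (g k w) w) := Ysig_meas hF hY (gst k).
have mYt : measurable_fun setT (fun w => Y (tau w) w).
  apply: (measurable_fun_cvg (h := fun k w => Y (g k w) w)) => // w _.
  apply/cvgrPdist_lt => e' e'0.
  have := grid_conv T0 (tb w) hrc e'0.
  by apply: filterS => k; rewrite distrC.
pose u k w := `|Y (g k w) w - Y (tau w) w|%R.
have ub w k : (u k w <= 2 * Ystar Tend Y w)%R.
  rewrite /u; apply: (le_trans (ler_normB _ _)).
  have [g1 g2 _] := grid_props k T0 (tb w).
  have := Ystar_bound w hbd (tb w).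
  have := @Ystar_bound _ _ _ _ Y w (g k w) hbd.
  have /andP[t0 _] := tb w.
  rewrite g2 (le_trans t0 g1) => /(_ isT).
  move=> h1 h2; lra.
have hub w : has_ubound (range (u ^~ w)).
  by exists (2 * Ystar Tend Y w)%R => _ [k _ <-]; exact: ub.
pose X n w := sups (u ^~ w) n.
have Xge n w : (u n w <= X n w)%R.
  by apply: ub_le_sup; [exact/has_ubound_sdrop/hub|exists n => /=].
have Xle n w : (X n w <= 2 * Ystar Tend Y w)%R.
  apply: ge_sup; first by exists (u n w), n => /=.
  by move=> _ [k _ <-]; exact: ub.
have u0 n w : (0 <= u n w)%R by exact: normr_ge0.
have mu k : measurable_fun setT (u k).
  by apply: measurableT_comp => //; exact: measurable_funB.
have mX n : measurable_fun setT (X n).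
  by apply: measurable_fun_sups => // t _; exact: hub.
have Ys0 w : (0 <= Ystar Tend Y w)%R.
  by apply: le_trans (Ystar_bound w hbd (tb w)).
have Xcal n : calX P Tend Y (X n).
  split => //; exists 2%R; split => //; apply: aeW => w.
  rewrite ger0_norm; last exact: le_trans (u0 n w) (Xge n w).
  by apply: (le_trans (Xle n w)); rewrite ler_pM2l // lerDl.
have Ycal s : stopping_time Tend F s ->
    measurable_fun setT (fun w => Y (s w) w) ->
    calX P Tend Y (fun w => Y (s w) w).
  move=> [sb _] ms; split => //; exists 1%R; split => //; apply: aeW => w.
  rewrite mul1r; apply: le_trans (Ystar_bound w hbd (sb w)) _.
  by rewrite lerDl.
have hrho := hcont X Xcal.
have u_cvg w : u ^~ w @ \oo --> 0%R.
  apply/cvgr0Pnorm_lt => e' e'0.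
  have := grid_conv T0 (tb w) hrc e'0.
  by apply: filterS => k; rewrite /u normr_id.
have := hrho (aeW _ (fun w => conj (nonincreasing_sups (hub w)) (cvg_sups (u_cvg w)))).
move=> /fine_cvgP [hfin hfine].
have [n [hn1 hn2]] := filter_ex (filterI hfin (cvgr_dist_lt _ _ hfine _ e0)).
have rhon : rhoQ Qs (X n) <= e%:E.
  rewrite -(fineK hn1) lee_fin; move: hn2; rewrite /= sub0r normrN => h.
  exact: le_trans (ler_norm _) (ltW h).
exists (g n); split => // Q hQ.
have [iYt _] := hQ _ (Ycal tau hst mYt).
have [iYg _] := hQ _ (Ycal (g n) (gst n).1 (mYg n)).
have [iX hX] := hQ _ (Xcal n).
rewrite /expect.
apply: (@le_trans _ _ (\int[Q]_w ((Y (g n w) w)%:E + (X n w)%:E))).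
  apply: le_integral => //; first exact: integrableD.
  move=> w _; rewrite -EFinD lee_fin.
  have := Xge n w; have := ler_norm (Y (tau w) w - Y (g n w) w)%R.
  rewrite /u distrC => h1 h2; lra.
rewrite integralD //.
apply: leeD2l; exact: le_trans hX rhon.
Qed.
Local Close Scope ereal_scope.

Theorem lemma6p6 (d : measure_display) (T : measurableType d) (R : realType)
  (P : probability T R) (Tend : R) (F : R -> set (set T))
  (Qs : set (probability T R)) (Y : R -> T -> R) :
  0 < Tend ->
  filtration P Tend F ->
  Qs !=set0 ->
  (forall Q, Qs Q -> Q `<< P) ->
  adapted Tend F Y ->
  right_continuous_paths Tend Y ->
  bounded_paths Tend Y ->
  quasi_left_usc P Tend F Y ->
  L1Q Qs (Ystar Tend Y) ->
  cont_from_above_at0 P Qs Tend Y ->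
  ereal_sup [set ereal_inf [set expect Q (fun w => Y (tau w) w)
                           | Q in Qbar P Qs Tend Y]
            | tau in stopping_time Tend F]
  = ereal_sup [set ereal_inf [set expect Q (fun w => Y (tau w) w)
                             | Q in Qbar P Qs Tend Y]
              | tau in finite_stopping_time Tend F]
  /\
  ereal_inf [set ereal_sup [set expect Q (fun w => Y (tau w) w)
                           | tau in stopping_time Tend F]
            | Q in Qbar P Qs Tend Y]
  = ereal_inf [set ereal_sup [set expect Q (fun w => Y (tau w) w)
                             | tau in finite_stopping_time Tend F]
              | Q in Qbar P Qs Tend Y].
Proof.
move=> T0 hF _ _ hY hrc hbd _ _ hcont.
have sub_fin : forall s, finite_stopping_time Tend F s -> stopping_time Tend F s.
  by move=> s [].
split.
- apply/eqP; rewrite eq_le; apply/andP; split.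
    apply: ge_ereal_sup => _ [tau hst <-].
    apply/lee_addgt0Pr => e e0.
    have [s [hs hQ]] := approx T0 hF hY hrc hbd hcont hst e0.
    apply: (@le_trans _ _ (ereal_inf [set expect Q (fun w => Y (s w) w)
                             | Q in Qbar P Qs Tend Y] + e%:E)%E).
      rewrite -leeBlDr //; apply: le_ereal_inf_tmp => _ [Q hQ' <-].
      rewrite leeBlDr //; apply: le_trans (hQ Q hQ').
      by apply: ereal_inf_lbound; exists Q.
    by apply: leeD2r; apply: ereal_sup_ubound; exists s.
  apply: ereal_sup_le => _ [tau hst <-]; exists tau => //; exact: sub_fin.
- apply/eqP; rewrite eq_le; apply/andP; split.
    apply: le_ereal_inf_tmp => _ [Q hQ <-].
    apply: le_trans; first by apply: ereal_inf_lbound; exists Q.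
    apply: ge_ereal_sup => _ [tau hst <-].
    apply/lee_addgt0Pr => e e0.
    have [s [hs hQs]] := approx T0 hF hY hrc hbd hcont hst e0.
    apply: le_trans (hQs Q hQ) _; apply: leeD2r.
    by apply: ereal_sup_ubound; exists s.
  apply: le_ereal_inf_tmp => _ [Q hQ <-].
  apply: le_trans; first by apply: ereal_inf_lbound; exists Q.
  apply: ereal_sup_le => _ [tau hst <-]; exists tau => //; exact: sub_fin.
Qed.
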